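(* Let $\mathcal{A}$ be an essentially small additive category admitting finite coproducts. Endow the split Grothendieck group $\mathrm{K}_0^\oplus(\mathcal{A})$ with the heap structure $[\overline{A},\overline{B},\overline{C}]_\oplus:=\overline{A}-\overline{B}+\overline{C}$. Then there is a canonical epimorphism of heaps $\mathrm{K}_0^\oplus(\mathcal{A})\twoheadrightarrow \mathrm{K}_0^{\mathrm{heap}}(\mathcal{A})$ sending the class of an object to the class of the same object.
   Context: A heap is a set $H$ with a ternary operation $[\_,\_,\_]:H^3\to H$ satisfying $[a,b,[c,d,e]]=[[a,b,c],d,e]$ and $[x,x,y]=y=[y,x,x]$. The split Grothendieck group $\mathrm{K}_0^\oplus(\mathcal{A})$ of an additive category is the abelian group generated by isomorphism classes $\overline{A}$ of objects subject to $\overline{A\oplus B}=\overline{A}+\overline{B}$. For an essentially small category $\mathcal{C}$, its Grothendieck heap $\mathrm{K}_0^{\mathrm{heap}}(\mathcal{C})$ is the heap generated by the isomorphism classes $\overline{X}$ of objects of $\mathcal{C}$, subject to the relations $[\overline{X},\overline{Y},\overline{Z}]=\overline{X\sqcup_Y Z}$ for every pushout square $X\leftarrow Y\rightarrow Z$ in $\mathcal{C}$ in which at least one of the two maps $Y\to X$, $Y\to Z$ is a monomorphism. *)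

(* Defs.v *)
From HB Require Import structures.
From mathcomp Require Import all_boot all_algebra.
From Stdlib Require Import ClassicalEpsilon.
Set Implicit Arguments.
Unset Strict Implicit.
Unset Printing Implicit Defensive.
Import GRing.Theory.
Local Open Scope ring_scope.

(** * Preadditive categories: Hom-sets are abelian groups, composition is
    bilinear.  Objects live in a [Type], so the category is (essentially)
    small relative to the ambient universe. *)
Record preadditive := PreAdd {
  Obj : Type;
  Hom : Obj -> Obj -> zmodType;
  idm : forall A, Hom A A;
  comp : forall A B C, Hom B C -> Hom A B -> Hom A C;
  comp_id_l : forall A B (f : Hom A B), comp (idm B) f = f;
  comp_id_r : forall A B (f : Hom A B), comp f (idm A) = f;
  comp_assoc : forall A B C D (f : Hom C D) (g : Hom B C) (h : Hom A B),
      comp f (comp g h) = comp (comp f g) h;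
  comp_addl : forall A B C (f g : Hom B C) (h : Hom A B),
      comp (f + g) h = comp f h + comp g h;
  comp_addr : forall A B C (h : Hom B C) (f g : Hom A B),
      comp h (f + g) = comp h f + comp h g
}.

Arguments idm {p} A.
Arguments comp {p A B C} _ _.

Section Cat.
Variable C : preadditive.

Definition is_zero_object (Z : Obj C) :=
  (forall A (f : Hom Z A), f = 0) /\ (forall A (g : Hom A Z), g = 0).

Definition is_biproduct (A B S : Obj C) :=
  exists (i1 : Hom A S) (i2 : Hom B S) (p1 : Hom S A) (p2 : Hom S B),
    [/\ comp p1 i1 = idm A, comp p2 i2 = idm B,
        comp p2 i1 = 0, comp p1 i2 = 0 &
        comp i1 p1 + comp i2 p2 = idm S].

(** Additive category: preadditive, with a zero object and all binary
    biproducts (hence all finite coproducts). *)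
Definition additive :=
  (exists Z, is_zero_object Z) /\ (forall A B, exists S, is_biproduct A B S).

Definition isomorphic (X Y : Obj C) :=
  exists (f : Hom X Y) (g : Hom Y X), comp g f = idm X /\ comp f g = idm Y.

Definition mono (X Y : Obj C) (f : Hom X Y) :=
  forall W (h k : Hom W X), comp f h = comp f k -> h = k.

Definition is_pushout (X Y Z P : Obj C) (f : Hom Y X) (g : Hom Y Z)
    (u : Hom X P) (v : Hom Z P) :=
  comp u f = comp v g /\
  forall Q (a : Hom X Q) (b : Hom Z Q), comp a f = comp b g ->
    exists h : Hom P Q, [/\ comp h u = a, comp h v = b &
      forall h' : Hom P Q, comp h' u = a -> comp h' v = b -> h' = h].

End Cat.

Definition quot (T : Type) (R : T -> T -> Prop) := {P : T -> Prop | exists x, P = R x}.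
Definition qcls (T : Type) (R : T -> T -> Prop) (x : T) : quot R :=
  exist _ (R x) (ex_intro _ x erefl).
Definition qrepr (T : Type) (R : T -> T -> Prop) (q : quot R) : T :=
  proj1_sig (constructive_indefinite_description _ (proj2_sig q)).

(** * Split Grothendieck group: free abelian group on objects modulo
    the congruence generated by [X ~ Y] for [X ≅ Y] and [A⊕B ~ A + B]. *)
Inductive gterm (C : preadditive) :=
  | gvar of Obj C | gzero | gadd of gterm C & gterm C | gneg of gterm C.
Arguments gzero {C}.

Inductive gcong (C : preadditive) : gterm C -> gterm C -> Prop :=
  | gc_refl x : gcong x x
  | gc_sym x y : gcong x y -> gcong y x
  | gc_trans x y z : gcong x y -> gcong y z -> gcong x z
  | gc_add x x' y y' : gcong x x' -> gcong y y' -> gcong (gadd x y) (gadd x' y')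
  | gc_neg x x' : gcong x x' -> gcong (gneg x) (gneg x')
  | gc_addA x y z : gcong (gadd x (gadd y z)) (gadd (gadd x y) z)
  | gc_addC x y : gcong (gadd x y) (gadd y x)
  | gc_add0 x : gcong (gadd gzero x) x
  | gc_addN x : gcong (gadd (gneg x) x) gzero
  | gc_iso X Y : isomorphic X Y -> gcong (gvar X) (gvar Y)
  | gc_biprod A B S : is_biproduct A B S ->
      gcong (gvar S) (gadd (gvar A) (gvar B)).

Definition K0sum (C : preadditive) := quot (@gcong C).
Definition clsS (C : preadditive) (X : Obj C) : K0sum C := qcls (@gcong C) (gvar X).
Definition sum_heap_op (C : preadditive) (a b c : K0sum C) : K0sum C :=
  qcls (@gcong C) (gadd (gadd (qrepr a) (gneg (qrepr b))) (qrepr c)).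

(** * Grothendieck heap: free heap on objects modulo the congruence generated
    by the heap axioms, [X ~ Y] for [X ≅ Y], and
    [[X,Y,Z] ~ X ⊔_Y Z] for pushouts with at least one leg a monomorphism. *)
Inductive hterm (C : preadditive) :=
  | hvar of Obj C | hop of hterm C & hterm C & hterm C.

Inductive hcong (C : preadditive) : hterm C -> hterm C -> Prop :=
  | hc_refl x : hcong x x
  | hc_sym x y : hcong x y -> hcong y x
  | hc_trans x y z : hcong x y -> hcong y z -> hcong x z
  | hc_op x x' y y' z z' : hcong x x' -> hcong y y' -> hcong z z' ->
      hcong (hop x y z) (hop x' y' z')
  | hc_assoc a b c d e : hcong (hop a b (hop c d e)) (hop (hop a b c) d e)
  | hc_cancl x y : hcong (hop x x y) y
  | hc_cancr x y : hcong (hop y x x) y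
  | hc_iso X Y : isomorphic X Y -> hcong (hvar X) (hvar Y)
  | hc_pushout X Y Z P (f : Hom Y X) (g : Hom Y Z) (u : Hom X P) (v : Hom Z P) :
      is_pushout f g u v -> (mono f \/ mono g) ->
      hcong (hop (hvar X) (hvar Y) (hvar Z)) (hvar P).

Definition K0heap (C : preadditive) := quot (@hcong C).
Definition clsH (C : preadditive) (X : Obj C) : K0heap C := qcls (@hcong C) (hvar X).
Definition heap_op (C : preadditive) (a b c : K0heap C) : K0heap C :=
  qcls (@hcong C) (hop (qrepr a) (qrepr b) (qrepr c)).

Definition heap_morphism (H1 H2 : Type) (o1 : H1 -> H1 -> H1 -> H1)
    (o2 : H2 -> H2 -> H2 -> H2) (f : H1 -> H2) :=
  forall a b c, f (o1 a b c) = o2 (f a) (f b) (f c).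

(* Main.v *)
Require Import Defs.
From mathcomp Require Import all_boot all_algebra.
From Stdlib Require Import FunctionalExtensionality PropExtensionality ProofIrrelevance ClassicalEpsilon.
Import Defs.
Set Implicit Arguments.
Unset Strict Implicit.
Unset Printing Implicit Defensive.
Import GRing.Theory.

Section HeapAlg.
Variable T : Type.
Variable h : T -> T -> T -> T.
Hypothesis hA : forall a b c d e, h a b (h c d e) = h (h a b c) d e.
Hypothesis hl : forall x y, h x x y = y.
Hypothesis hr : forall x y, h y x x = y.
Variable o : T.
Definition hmul x y := h x o y.
Definition hinv x := h o x o.
Lemma hmulA x y z : hmul x (hmul y z) = hmul (hmul x y) z.
Proof. exact: hA. Qed.
Lemma hmul1l y : hmul o y = y. Proof. exact: hl. Qed.
Lemma hmul1r y : hmul y o = y. Proof. exact: hr. Qed.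
Lemma hmulVl x : hmul (hinv x) x = o.
Proof. by rewrite /hmul /hinv -hA hl hr. Qed.
Lemma hmulVr x : hmul x (hinv x) = o.
Proof. by rewrite /hmul /hinv hA hr hl. Qed.
Lemma h_eq a b c : h a b c = hmul (hmul a (hinv b)) c.
Proof. by rewrite /hmul /hinv hA hr -hA hl. Qed.
Definition hcomm x y := hmul x y = hmul y x.
Lemma hcomm_inv x b : hcomm x b -> hcomm x (hinv b).
Proof.
move=> E; rewrite /hcomm.
transitivity (hmul (hinv b) (hmul (hmul b x) (hinv b))).
  by rewrite -hmulA hmulA hmulVl hmul1l.
by rewrite -E -hmulA hmulVr hmul1r.
Qed.
Lemma hcomm_mul x a b : hcomm x a -> hcomm x b -> hcomm x (hmul a b).
Proof.
by move=> Ea Eb; rewrite /hcomm hmulA Ea -hmulA Eb hmulA.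
Qed.
Lemma hcomm_h x a b c : hcomm x a -> hcomm x b -> hcomm x c -> hcomm x (h a b c).
Proof.
move=> Ea Eb Ec; rewrite h_eq; apply: hcomm_mul => //; apply: hcomm_mul => //.
exact: hcomm_inv.
Qed.
Lemma hcomm_sym x y : hcomm x y -> hcomm y x.
Proof. by []. Qed.
End HeapAlg.

Lemma exist_eqP (T : Type) (R : T -> T -> Prop) (P1 P2 : T -> Prop)
  (H1 : exists x, P1 = R x) (H2 : exists x, P2 = R x) :
  P1 = P2 -> (exist _ P1 H1 : quot R) = exist _ P2 H2.
Proof. move=> E; subst P2; by rewrite (proof_irrelevance _ H1 H2). Qed.

Section Quot.
Variable T : Type.
Variable R : T -> T -> Prop.
Hypothesis Rr : forall x, R x x.
Hypothesis Rs : forall x y, R x y -> R y x.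
Hypothesis Rt : forall x y z, R x y -> R y z -> R x z.

Lemma qcls_eq x y : R x y -> qcls R x = qcls R y.
Proof.
move=> Hxy; apply: exist_eqP; apply: functional_extensionality => z.
apply: propositional_extensionality; split => H.
- exact: Rt (Rs Hxy) H.
- exact: Rt Hxy H.
Qed.

Lemma qrepr_spec (q : quot R) : proj1_sig q = R (qrepr q).
Proof.
rewrite /qrepr; case: (constructive_indefinite_description _ _) => r /= ->.
by [].
Qed.

Lemma qrepr_qcls x : R x (qrepr (qcls R x)).
Proof.
have := qrepr_spec (qcls R x); rewrite /= => ->; exact: Rr.
Qed.

Lemma qcls_repr (q : quot R) : qcls R (qrepr q) = q.
Proof.
case: q => P HP; apply: exist_eqP; exact: (esym (qrepr_spec (exist _ P HP))).
Qed.
End Quot.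

Section Main.
Local Open Scope ring_scope.
Variable C : preadditive.
Variable Z : Obj C.
Hypothesis HZ : is_zero_object Z.
Hypothesis Hbp : forall A B : Obj C, exists S, is_biproduct A B S.

Lemma hR_r (x : hterm C) : hcong x x. Proof. exact: hc_refl. Qed.
Lemma hR_s (x y : hterm C) : hcong x y -> hcong y x. Proof. exact: hc_sym. Qed.
Lemma hR_t (x y z : hterm C) : hcong x y -> hcong y z -> hcong x z. Proof. exact: hc_trans. Qed.
Lemma gR_r (x : gterm C) : gcong x x. Proof. exact: gc_refl. Qed.
Lemma gR_s (x y : gterm C) : gcong x y -> gcong y x. Proof. exact: gc_sym. Qed.
Lemma gR_t (x y z : gterm C) : gcong x y -> gcong y z -> gcong x z. Proof. exact: gc_trans. Qed.

Lemma heap_op_cls a b c :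
  heap_op (qcls _ a) (qcls _ b) (qcls _ c) = qcls (@hcong C) (hop a b c).
Proof.
rewrite /heap_op; apply: (qcls_eq hR_s hR_t).
by apply: hc_op; apply: hc_sym; apply: (qrepr_qcls hR_r).
Qed.

Lemma qind (P : K0heap C -> Prop) : (forall t, P (qcls _ t)) -> forall q, P q.
Proof. by move=> H q; rewrite -(qcls_repr q). Qed.

Lemma hAq (a b c d e : K0heap C) :
  heap_op a b (heap_op c d e) = heap_op (heap_op a b c) d e.
Proof.
move: a b c d e; do 5 apply: qind => ?.
rewrite !heap_op_cls; apply: (qcls_eq hR_s hR_t); exact: hc_assoc.
Qed.
Lemma hlq (x y : K0heap C) : heap_op x x y = y.
Proof.
move: x y; do 2 apply: qind => ?.
rewrite !heap_op_cls; apply: (qcls_eq hR_s hR_t); exact: hc_cancl.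
Qed.
Lemma hrq (x y : K0heap C) : heap_op y x x = y.
Proof.
move: x y; do 2 apply: qind => ?.
rewrite !heap_op_cls; apply: (qcls_eq hR_s hR_t); exact: hc_cancr.
Qed.

Definition o := clsH Z.
Definition M := hmul (@heap_op C) o.
Definition V := hinv (@heap_op C) o.

Lemma comp0r (A B D : Obj C) (h : Defs.Hom B D) : Defs.comp h (0 : Defs.Hom A B) = 0.
Proof.
have := comp_addr h (0 : Defs.Hom A B) 0; rewrite addr0.
by move/(congr1 (fun y => y - Defs.comp h 0)); rewrite subrr addrK.
Qed.
Lemma comp0l (A B D : Obj C) (h : Defs.Hom A B) : Defs.comp (0 : Defs.Hom B D) h = 0.
Proof.
have := comp_addl (0 : Defs.Hom B D) 0 h; rewrite addr0.
by move/(congr1 (fun y => y - Defs.comp 0 h)); rewrite subrr addrK.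
Qed.

Lemma biprod_push (A B S : Obj C) : is_biproduct A B S ->
  hcong (hop (hvar A) (hvar Z) (hvar B)) (hvar S).
Proof.
case=> i1 [i2 [p1 [p2 [H11 H22 H21 H12 Hid]]]].
apply: (@hc_pushout C A Z B S 0 0 i1 i2).
  split; first by rewrite !comp0r.
  move=> Q a b _; exists (comp a p1 + comp b p2); split.
  - by rewrite comp_addl -!comp_assoc H11 H21 comp_id_r comp0r addr0.
  - by rewrite comp_addl -!comp_assoc H12 H22 comp_id_r comp0r add0r.
  - move=> h' E1 E2.
    by rewrite -[h']comp_id_r -Hid comp_addr !comp_assoc E1 E2.
left=> W h k _; by rewrite (proj2 HZ _ h) (proj2 HZ _ k).
Qed.

Lemma biprod_swap (A B S : Obj C) : is_biproduct A B S -> is_biproduct B A S.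
Proof.
case=> i1 [i2 [p1 [p2 [H11 H22 H21 H12 Hid]]]].
exists i2, i1, p2, p1; split => //; by rewrite addrC.
Qed.

Lemma mul_var (A B S : Obj C) : is_biproduct A B S -> M (clsH A) (clsH B) = clsH S.
Proof.
move=> H; rewrite /M /hmul /o /clsH heap_op_cls.
apply: (qcls_eq hR_s hR_t); exact: biprod_push.
Qed.

Lemma comm_var (A B : Obj C) : M (clsH A) (clsH B) = M (clsH B) (clsH A).
Proof.
have [S HS] := Hbp A B.
by rewrite (mul_var HS) (mul_var (biprod_swap HS)).
Qed.

Lemma comm_var_all (A : Obj C) t : hcomm (@heap_op C) o (clsH A) (qcls _ t).
Proof.
elim: t => [B | a IHa b IHb c IHc]; first exact: comm_var.
rewrite -heap_op_cls; exact: (hcomm_h hAq hlq hrq).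
Qed.

Lemma comm_all (p q : K0heap C) : M p q = M q p.
Proof.
move: p q; apply: qind => t; apply: qind => s.
elim: t => [B | a IHa b IHb c IHc]; first exact: comm_var_all.
rewrite -heap_op_cls; apply: hcomm_sym; exact: (hcomm_h hAq hlq hrq).
Qed.

Fixpoint I (t : gterm C) : K0heap C :=
  match t with
  | gvar X => clsH X
  | gzero => o
  | gadd x y => M (I x) (I y)
  | gneg x => V (I x)
  end.

Lemma I_cong x y : gcong x y -> I x = I y.
Proof.
elim=> /=.
- by [].
- by move=> ? ? _ ->.
- by move=> ? ? ? _ -> _ ->.
- by move=> ? ? ? ? _ -> _ ->.
- by move=> ? ? _ ->.
- move=> ? ? ?; exact: (hmulA hAq).
- move=> ? ?; exact: comm_all.
- move=> ?; exact: (hmul1l hlq).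
- move=> ?; exact: (hmulVl hAq hlq hrq).
- move=> X Y H; apply: (qcls_eq hR_s hR_t); exact: hc_iso.
- move=> A B S H; by rewrite (mul_var H).
Qed.

Definition fmap (q : K0sum C) : K0heap C := I (qrepr q).

Lemma fmap_cls t : fmap (qcls _ t) = I t.
Proof. apply: I_cong; apply: gc_sym; exact: (qrepr_qcls gR_r). Qed.

Fixpoint J (t : hterm C) : gterm C :=
  match t with
  | hvar X => gvar X
  | hop a b c => gadd (gadd (J a) (gneg (J b))) (J c)
  end.

Lemma IJ t : I (J t) = qcls _ t.
Proof.
elim: t => [X | a IHa b IHb c IHc] //=.
by rewrite IHa IHb IHc /M /V -(h_eq hAq hlq hrq) heap_op_cls.
Qed.

End Main.

Import Defs.

Theorem theorem2p8 (C : preadditive) (HC : additive C) :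
  exists f : K0sum C -> K0heap C,
    [/\ heap_morphism (@sum_heap_op C) (@heap_op C) f,
        (forall y : K0heap C, exists x : K0sum C, f x = y) &
        (forall X : Obj C, f (clsS X) = clsH X)].
Proof.
case: HC => [[Z HZ] Hbp].
exists (fmap Z); split.
- move=> a b c; rewrite /sum_heap_op (fmap_cls HZ Hbp) /=.
  by rewrite /M /V -(h_eq (@hAq C) (@hlq C) (@hrq C)).
- move=> y; rewrite -(qcls_repr y); exists (qcls _ (J (qrepr y))); by rewrite (fmap_cls HZ Hbp) IJ.
- move=> X; by rewrite /clsS (fmap_cls HZ Hbp).
Qed.
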